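(* Let $k$ be a real division algebra, $\mathcal Z\subset k$ a discrete subring closed under conjugation, $(a_n)_{n\ge1}$ a sequence in $\mathcal Z$ and $x_0\in k$ with $x_n=T_{a_n}\cdots T_{a_1}x_0$ defined and $\|x_n\|<1$ for all $n\ge0$. Then the sequence $\|x_n\|$ does not converge to $1$.
   Context: $k\in\{\mathbb{R},\mathbb{C},\mathbb{H},\mathbb{O}\}$, identified with $\mathbb{R}^d$ with Euclidean norm $\|x\|^2=x\overline x$. For $a\in\mathcal Z$, $T_ax=x^{-1}-a$. Discrete means discrete in $\mathbb{R}^d$. *)

(* Defs.v *)
From Stdlib Require Import Reals.
Open Scope R_scope.

(* The Cayley-Dickson algebras over R: CD 0 = R, CD 1 = C, CD 2 = H, CD 3 = O.
   CD n is R^(2^n) (nested pairs). *)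
Fixpoint CD (n : nat) : Type :=
  match n with O => R | S m => (CD m * CD m)%type end.

Fixpoint cd_zero (n : nat) : CD n :=
  match n return CD n with O => 0 | S m => (cd_zero m, cd_zero m) end.

Fixpoint cd_one (n : nat) : CD n :=
  match n return CD n with O => 1 | S m => (cd_one m, cd_zero m) end.

Fixpoint cd_add (n : nat) : CD n -> CD n -> CD n :=
  match n return CD n -> CD n -> CD n with
  | O => fun x y => x + y
  | S m => fun x y => (cd_add m (fst x) (fst y), cd_add m (snd x) (snd y))
  end.

Fixpoint cd_opp (n : nat) : CD n -> CD n :=
  match n return CD n -> CD n with
  | O => fun x => - x
  | S m => fun x => (cd_opp m (fst x), cd_opp m (snd x))
  end.

Definition cd_sub (n : nat) (x y : CD n) : CD n := cd_add n x (cd_opp n y).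

Fixpoint cd_scale (n : nat) (r : R) : CD n -> CD n :=
  match n return CD n -> CD n with
  | O => fun x => r * x
  | S m => fun x => (cd_scale m r (fst x), cd_scale m r (snd x))
  end.

Fixpoint cd_conj (n : nat) : CD n -> CD n :=
  match n return CD n -> CD n with
  | O => fun x => x
  | S m => fun x => (cd_conj m (fst x), cd_opp m (snd x))
  end.

Fixpoint cd_mul (n : nat) : CD n -> CD n -> CD n :=
  match n return CD n -> CD n -> CD n with
  | O => fun x y => x * y
  | S m => fun x y =>
      let a := fst x in let b := snd x in let c := fst y in let d := snd y in
      (cd_sub m (cd_mul m a c) (cd_mul m (cd_conj m d) b),
       cd_add m (cd_mul m d a) (cd_mul m b (cd_conj m c)))
  end.

(* squared Euclidean norm in R^(2^n); equals x * conj x *)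
Fixpoint cd_nsq (n : nat) : CD n -> R :=
  match n return CD n -> R with
  | O => fun x => x * x
  | S m => fun x => cd_nsq m (fst x) + cd_nsq m (snd x)
  end.

Definition cd_norm (n : nat) (x : CD n) : R := sqrt (cd_nsq n x).

(* inverse x^{-1} = conj x / ||x||^2 (meaningful for x <> 0) *)
Definition cd_inv (n : nat) (x : CD n) : CD n :=
  cd_scale n (/ cd_nsq n x) (cd_conj n x).

Definition T (n : nat) (a x : CD n) : CD n := cd_sub n (cd_inv n x) a.

Definition is_subring (n : nat) (Z : CD n -> Prop) : Prop :=
  Z (cd_one n) /\
  (forall x y, Z x -> Z y -> Z (cd_sub n x y)) /\
  (forall x y, Z x -> Z y -> Z (cd_mul n x y)).

Definition conj_closed (n : nat) (Z : CD n -> Prop) : Prop :=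
  forall x, Z x -> Z (cd_conj n x).

Definition discrete (n : nat) (Z : CD n -> Prop) : Prop :=
  forall z, Z z -> exists eps, 0 < eps /\
    forall w, Z w -> cd_norm n (cd_sub n w z) < eps -> w = z.

(* Main.v *)
Require Import Defs.
From Stdlib Require Import Reals.
From Stdlib Require Import Lra Lia ClassicalEpsilon Classical.
Open Scope R_scope.


Fixpoint cd_dot (n : nat) : CD n -> CD n -> R :=
  match n return CD n -> CD n -> R with
  | O => fun x y => x * y
  | S m => fun x y => cd_dot m (fst x) (fst y) + cd_dot m (snd x) (snd y)
  end.

Ltac cdind IH := let n := fresh "n" in
  intro n; induction n as [|n IH]; simpl; intros;
  [ try (unfold cd_sub; simpl); try ring
  | repeat match goal with p : (_ * _)%type |- _ => destruct p end;
    try (unfold cd_sub in *; simpl in *); try f_equal; auto ].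

Lemma I_sub_diag : forall n (x : CD n), cd_sub n x x = cd_zero n.
Proof. cdind IH; unfold cd_sub in IH; auto. Qed.
Lemma I_add_sub_zero : forall n (x y : CD n), cd_add n x y = cd_sub n x (cd_sub n (cd_zero n) y).
Proof. cdind IH; unfold cd_sub in IH; auto. Qed.
Lemma I_z3 : forall n (u v w : CD n), cd_add n (cd_sub n u v) (cd_add n w v) = cd_add n w u.
Proof. cdind IH; unfold cd_sub in IH; auto. Qed.
Lemma I_addsub : forall n (y b : CD n), cd_sub n (cd_add n y b) b = y.
Proof. cdind IH; unfold cd_sub in IH; auto. Qed.
Lemma I_shift : forall n (b u q : CD n), cd_sub n (cd_add n b u) q = cd_add n (cd_sub n b q) u.
Proof. cdind IH; unfold cd_sub in IH; auto. Qed.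
Lemma I_shift2 : forall n (y b q : CD n), cd_sub n (cd_add n y b) q = cd_add n (cd_sub n b q) y.
Proof. cdind IH; unfold cd_sub in IH; auto. Qed.
Lemma I_subadd_opp : forall n (b y : CD n), cd_sub n b (cd_add n y b) = cd_opp n y.
Proof. cdind IH; unfold cd_sub in IH; auto. Qed.
Lemma I_cancel_r : forall n (y p b : CD n), cd_sub n (cd_add n y b) (cd_add n p b) = cd_sub n y p.
Proof. cdind IH; unfold cd_sub in IH; auto. Qed.
Lemma I_cancel_l : forall n (p l m : CD n), cd_sub n (cd_add n p l) (cd_add n p m) = cd_sub n l m.
Proof. cdind IH; unfold cd_sub in IH; auto. Qed.
Lemma I_subsub : forall n (b l p : CD n), cd_sub n (cd_sub n b l) p = cd_sub n b (cd_add n p l).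
Proof. cdind IH; unfold cd_sub in IH; auto. Qed.
Lemma I_chasles : forall n (x y z : CD n), cd_sub n x z = cd_add n (cd_sub n x y) (cd_sub n y z).
Proof. cdind IH; unfold cd_sub in IH; auto. Qed.
Lemma I_sub_zero : forall n (x : CD n), cd_sub n x (cd_zero n) = x.
Proof. cdind IH; unfold cd_sub in IH; auto. Qed.
Lemma I_subK : forall n (x y : CD n), cd_add n (cd_sub n x y) y = x.
Proof. cdind IH; unfold cd_sub in IH; auto. Qed.
Lemma I_zero_add : forall n (y : CD n), cd_add n (cd_zero n) y = y.
Proof. cdind IH; unfold cd_sub in IH; auto. Qed.
Lemma I_sub_swap : forall n (x y : CD n), cd_sub n y x = cd_opp n (cd_sub n x y).
Proof. cdind IH; unfold cd_sub in IH; auto. Qed.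
Lemma opp_add : forall n (x y : CD n), cd_opp n (cd_add n x y) = cd_add n (cd_opp n x) (cd_opp n y).
Proof. cdind IH. Qed.
Lemma opp_opp : forall n (x : CD n), cd_opp n (cd_opp n x) = x.
Proof. cdind IH. Qed.
Lemma conj_opp : forall n (x : CD n), cd_conj n (cd_opp n x) = cd_opp n (cd_conj n x).
Proof. cdind IH. Qed.
Lemma conj_add : forall n (x y : CD n), cd_conj n (cd_add n x y) = cd_add n (cd_conj n x) (cd_conj n y).
Proof. cdind IH. apply opp_add. Qed.
Lemma conj_sub : forall n (x y : CD n), cd_conj n (cd_sub n x y) = cd_sub n (cd_conj n x) (cd_conj n y).
Proof. intros; unfold cd_sub; rewrite conj_add, conj_opp; auto. Qed.
Lemma scale_opp : forall n c (x : CD n), cd_scale n c (cd_opp n x) = cd_opp n (cd_scale n c x).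
Proof. cdind IH. Qed.
Lemma conj_scale : forall n c (x : CD n), cd_conj n (cd_scale n c x) = cd_scale n c (cd_conj n x).
Proof. cdind IH. symmetry; apply scale_opp. Qed.
Lemma conj_conj : forall n (x : CD n), cd_conj n (cd_conj n x) = x.
Proof. cdind IH. apply opp_opp. Qed.
Lemma nsq_opp : forall n (x : CD n), cd_nsq n (cd_opp n x) = cd_nsq n x.
Proof. cdind IH. Qed.
Lemma nsq_conj : forall n (x : CD n), cd_nsq n (cd_conj n x) = cd_nsq n x.
Proof. cdind IH. rewrite nsq_opp; auto. Qed.
Lemma nsq_nonneg : forall n (x : CD n), 0 <= cd_nsq n x.
Proof. intro n; induction n as [|n IH]; simpl; intros. nra. apply Rplus_le_le_0_compat; auto. Qed.
Lemma nsq_eq0 : forall n (x : CD n), cd_nsq n x = 0 -> x = cd_zero n.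
Proof. intro n; induction n as [|n IH]; simpl; intros. nra. destruct x as [u v]; simpl in *.
  pose proof (nsq_nonneg n u); pose proof (nsq_nonneg n v). f_equal; apply IH; lra. Qed.
Lemma nsq_add : forall n (x y : CD n), cd_nsq n (cd_add n x y) = cd_nsq n x + 2 * cd_dot n x y + cd_nsq n y.
Proof. intro n; induction n as [|n IH]; simpl; intros. ring. rewrite !IH. ring. Qed.
Lemma nsq_scale : forall n c (x : CD n), cd_nsq n (cd_scale n c x) = c * c * cd_nsq n x.
Proof. intro n; induction n as [|n IH]; simpl; intros. ring. rewrite !IH. ring. Qed.
Lemma dot_scale_r : forall n c (x y : CD n), cd_dot n x (cd_scale n c y) = c * cd_dot n x y.
Proof. intro n; induction n as [|n IH]; simpl; intros. ring. rewrite !IH. ring. Qed.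
Lemma dot_zero_r : forall n (x : CD n), cd_dot n x (cd_zero n) = 0.
Proof. intro n; induction n as [|n IH]; simpl; intros. ring. rewrite !IH. ring. Qed.

Lemma cauchy_schwarz : forall n (x y : CD n), cd_dot n x y * cd_dot n x y <= cd_nsq n x * cd_nsq n y.
Proof.
  intros n x y. pose proof (nsq_nonneg n x). pose proof (nsq_nonneg n y).
  destruct (Req_dec (cd_nsq n y) 0) as [Hz|Hz].
  - apply nsq_eq0 in Hz. subst y. rewrite dot_zero_r. nra.
  - set (t := - cd_dot n x y / cd_nsq n y).
    pose proof (nsq_nonneg n (cd_add n x (cd_scale n t y))) as Hq.
    rewrite nsq_add, dot_scale_r, nsq_scale in Hq.
    assert (Hp : 0 < cd_nsq n y) by lra.
    unfold t in Hq. field_simplify in Hq; [|lra].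
    apply Rmult_le_reg_r with (r := / cd_nsq n y). apply Rinv_0_lt_compat; lra.
    replace (cd_nsq n x * cd_nsq n y * / cd_nsq n y) with (cd_nsq n x) by (field; lra).
    assert (Hi : 0 < / cd_nsq n y) by (apply Rinv_0_lt_compat; lra).
    assert (E : (cd_nsq n x * cd_nsq n y - cd_dot n x y ^ 2) * / cd_nsq n y = cd_nsq n x - cd_dot n x y * cd_dot n x y * / cd_nsq n y) by (field; lra).
    lra.
Qed.

Lemma norm_nonneg : forall n (x : CD n), 0 <= cd_norm n x.
Proof. intros; unfold cd_norm; apply sqrt_pos. Qed.
Lemma norm_sq : forall n (x : CD n), cd_norm n x * cd_norm n x = cd_nsq n x.
Proof. intros; unfold cd_norm; apply sqrt_sqrt, nsq_nonneg. Qed.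
Lemma norm_lt_of : forall n (x : CD n) c, 0 <= c -> cd_nsq n x < c * c -> cd_norm n x < c.
Proof. intros n x c Hc H. pose proof (norm_sq n x). pose proof (norm_nonneg n x). nra. Qed.
Lemma nsq_lt_of : forall n (x : CD n) c, cd_norm n x < c -> cd_nsq n x < c * c.
Proof. intros n x c H. pose proof (norm_sq n x). pose proof (norm_nonneg n x). nra. Qed.
Lemma norm_le_of : forall n (x y : CD n), cd_nsq n x <= cd_nsq n y -> cd_norm n x <= cd_norm n y.
Proof. intros; unfold cd_norm; apply sqrt_le_1_alt; auto. Qed.

Lemma norm_add : forall n (u v : CD n), cd_norm n (cd_add n u v) <= cd_norm n u + cd_norm n v.
Proof.
  intros n u v. pose proof (norm_sq n u). pose proof (norm_sq n v).
  pose proof (norm_sq n (cd_add n u v)). pose proof (norm_nonneg n u).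
  pose proof (norm_nonneg n v). pose proof (norm_nonneg n (cd_add n u v)).
  pose proof (cauchy_schwarz n u v). rewrite nsq_add in H1. rewrite <- H, <- H0 in H5, H1.
  set (a := cd_norm n u) in *. set (b := cd_norm n v) in *.
  set (c := cd_norm n (cd_add n u v)) in *. set (dd := cd_dot n u v) in *.
  assert (dd <= a * b).
  { destruct (Rle_dec dd 0). nra. assert (0 <= a*b) by nra.
    apply Rnot_lt_le; intro Hc. assert (a*b*(a*b) < dd*dd) by nra. nra. }
  nra.
Qed.
Lemma norm_tri : forall n (x y z : CD n), cd_norm n (cd_sub n x z) <= cd_norm n (cd_sub n x y) + cd_norm n (cd_sub n y z).
Proof. intros; rewrite (I_chasles n x y z); apply norm_add. Qed.
Lemma norm_sym : forall n (x y : CD n), cd_norm n (cd_sub n x y) = cd_norm n (cd_sub n y x).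
Proof. intros; unfold cd_norm; rewrite (I_sub_swap n y x), nsq_opp; auto. Qed.
Lemma nsq_sym : forall n (x y : CD n), cd_nsq n (cd_sub n x y) = cd_nsq n (cd_sub n y x).
Proof. intros; rewrite (I_sub_swap n y x), nsq_opp; auto. Qed.

Lemma subseq_of_freq (P : nat -> nat -> Prop) :
  (forall j N, exists k, (N <= k)%nat /\ P j k) ->
  exists phi : nat -> nat, (forall j, (phi j < phi (S j))%nat) /\ forall j, P j (phi j).
Proof.
  intros H.
  set (f := fun j N => proj1_sig (constructive_indefinite_description _ (H j N))).
  assert (spec : forall j N, (N <= f j N)%nat /\ P j (f j N)).
  { intros j N. unfold f. destruct (constructive_indefinite_description _ (H j N)); simpl; auto. }
  exists (fix g j := match j with O => f O O | S j' => f (S j') (S (g j')) end).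
  split; intros j.
  - simpl. destruct (spec (S j) (S ((fix g (j : nat) : nat := match j with
                                   | 0%nat => f 0%nat 0%nat
                                   | S j' => f (S j') (S (g j'))
                                   end) j))). lia.
  - destruct j; simpl; apply spec.
Qed.

Lemma incr_mono (phi : nat -> nat) : (forall j, (phi j < phi (S j))%nat) ->
  forall i j, (i < j)%nat -> (phi i < phi j)%nat.
Proof. intros H i j Hij. induction Hij. apply H. specialize (H m). lia. Qed.

Lemma incr_ge (phi : nat -> nat) : (forall j, (phi j < phi (S j))%nat) -> forall j, (j <= phi j)%nat.
Proof. intros H j. induction j. lia. specialize (H j). lia. Qed.

Lemma bw_R (u : nat -> R) (M : R) : (forall k, u k * u k <= M) ->
  exists l phi, (forall j, (phi j < phi (S j))%nat) /\
   forall eta, 0 < eta -> exists J, forall j, (J <= j)%nat -> (u (phi j) - l) * (u (phi j) - l) < eta.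
Proof.
  intros HM.
  assert (HX : forall k, - (M + 1) <= u k <= M + 1).
  { intros k. specialize (HM k). destruct (Rle_dec (Rabs (u k)) 1) as [h|h].
    - destruct (Rle_dec 0 (u k)); [rewrite Rabs_right in h by lra | rewrite Rabs_left in h by lra]; nra.
    - apply Rnot_le_lt in h. destruct (Rle_dec 0 (u k)).
      + rewrite Rabs_right in h by lra. nra.
      + rewrite Rabs_left in h by lra. nra. }
  destruct (Bolzano_Weierstrass u _ (compact_P3 (- (M + 1)) (M + 1)) HX) as [l Hl].
  assert (Hf : forall j N, exists k, (N <= k)%nat /\ Rabs (u k - l) < / (INR j + 1)).
  { intros j N.
    assert (Hp : 0 < / (INR j + 1)) by (apply Rinv_0_lt_compat; pose proof (pos_INR j); lra).
    destruct (Hl (disc l (mkposreal _ Hp)) N) as [k [Hk1 Hk2]].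
    - exists (mkposreal _ Hp). intros z Hz; exact Hz.
    - exists k; split; auto. }
  destruct (subseq_of_freq _ Hf) as [phi [Hphi Hphi2]].
  exists l, phi; split; auto.
  intros eta Heta. destruct (INR_archimed eta 1 Heta) as [J HJ].
  exists J. intros j Hj. specialize (Hphi2 j).
  apply le_INR in Hj. pose proof (pos_INR j).
  set (a := / (INR j + 1)) in *.
  assert (Ha : 0 < a) by (apply Rinv_0_lt_compat; lra).
  assert (Ha1 : a * (INR j + 1) = 1) by (unfold a; field; lra).
  assert (a < eta) by nra.
  assert (a <= 1) by nra.
  apply Rabs_def2 in Hphi2. nra.
Qed.

Lemma nsq_pair : forall n (x y : CD (S n)),
  cd_nsq (S n) (cd_sub (S n) x y) = cd_nsq n (cd_sub n (fst x) (fst y)) + cd_nsq n (cd_sub n (snd x) (snd y)).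
Proof. reflexivity. Qed.

Lemma bw_cd : forall n (u : nat -> CD n) M, (forall k, cd_nsq n (u k) <= M) ->
  exists p phi, (forall j, (phi j < phi (S j))%nat) /\
   forall eta, 0 < eta -> exists J, forall j, (J <= j)%nat -> cd_nsq n (cd_sub n (u (phi j)) p) < eta.
Proof.
  intro n; induction n as [|n IH]; intros u M HM.
  - destruct (bw_R u M HM) as [l [phi [H1 H2]]]. exists l, phi. split; auto.
  - assert (HM1 : forall k, cd_nsq n (fst (u k)) <= M).
    { intros k. specialize (HM k). simpl in HM. pose proof (nsq_nonneg n (snd (u k))). lra. }
    assert (HM2 : forall k, cd_nsq n (snd (u k)) <= M).
    { intros k. specialize (HM k). simpl in HM. pose proof (nsq_nonneg n (fst (u k))). lra. }
    destruct (IH (fun k => fst (u k)) M HM1) as [p1 [phi1 [I1 C1]]].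
    destruct (IH (fun j => snd (u (phi1 j))) M (fun j => HM2 (phi1 j))) as [p2 [phi2 [I2 C2]]].
    exists (p1, p2), (fun j => phi1 (phi2 j)). split.
    + intros j. apply incr_mono; auto.
    + intros eta Heta.
      destruct (C1 (eta/2)) as [J1 HJ1]; [lra|].
      destruct (C2 (eta/2)) as [J2 HJ2]; [lra|].
      exists (max J1 J2). intros j Hj. rewrite nsq_pair. simpl.
      assert (J1 <= phi2 j)%nat by (pose proof (incr_ge phi2 I2 j); lia).
      specialize (HJ1 _ H). assert (J2 <= j)%nat by lia. specialize (HJ2 _ H0). simpl in *. lra.
Qed.

Lemma cluster_cd : forall n (u : nat -> CD n) M, (forall k, cd_nsq n (u k) <= M) ->
  exists p, forall eta, 0 < eta -> forall N, exists t, (N <= t)%nat /\ cd_nsq n (cd_sub n (u t) p) < eta.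
Proof.
  intros n u M HM. destruct (bw_cd n u M HM) as [p [phi [I C]]]. exists p.
  intros eta Heta N. destruct (C eta Heta) as [J HJ]. exists (phi (max J N)).
  split. pose proof (incr_ge phi I (max J N)); lia. apply HJ; lia.
Qed.

Definition conjn n k (x : CD n) : CD n := Nat.iter k (cd_conj n) x.

Lemma conjn_sub : forall n k (x y : CD n), conjn n k (cd_sub n x y) = cd_sub n (conjn n k x) (conjn n k y).
Proof. intros n k; induction k; intros; simpl; auto. unfold conjn in *; simpl. rewrite IHk, conj_sub; auto. Qed.
Lemma conjn_scale : forall n k c (x : CD n), conjn n k (cd_scale n c x) = cd_scale n c (conjn n k x).
Proof. intros n k; induction k; intros; simpl; auto. unfold conjn in *; simpl. rewrite IHk, conj_scale; auto. Qed.
Lemma conjn_conj : forall n k (x : CD n), conjn n k (cd_conj n x) = cd_conj n (conjn n k x).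
Proof. intros n k; induction k; intros; simpl; auto. unfold conjn in *; simpl. rewrite IHk; auto. Qed.
Lemma nsq_conjn : forall n k (x : CD n), cd_nsq n (conjn n k x) = cd_nsq n x.
Proof. intros n k; induction k; intros; simpl; auto. unfold conjn in *; simpl. rewrite nsq_conj; auto. Qed.
Lemma nsq_zero : forall n, cd_nsq n (cd_zero n) = 0.
Proof. intro n; induction n; simpl; auto. ring. rewrite IHn; ring. Qed.

Fixpoint betaseq n (b : nat -> CD n) (t : nat) : CD n :=
  match t with O => cd_zero n | S t' => cd_add n (betaseq n b t') (b (S t')) end.

Lemma nsq_add_le : forall n (u v : CD n), cd_nsq n (cd_add n u v) <= 2 * cd_nsq n u + 2 * cd_nsq n v.
Proof.
  intros. pose proof (norm_add n u v). rewrite <- !norm_sq.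
  pose proof (norm_nonneg n u). pose proof (norm_nonneg n v). pose proof (norm_nonneg n (cd_add n u v)).
  assert (cd_norm n (cd_add n u v) * cd_norm n (cd_add n u v) <= (cd_norm n u + cd_norm n v) * (cd_norm n u + cd_norm n v))
    by (apply Rmult_le_compat; lra).
  pose proof (Rle_0_sqr (cd_norm n u - cd_norm n v)); unfold Rsqr in *. nra.
Qed.

Lemma gap_lemma n (Z : CD n -> Prop) e0 (He0 : 0 < e0)
  (Hud : forall l m, Z l -> Z m -> cd_norm n (cd_sub n l m) < e0 -> l = m) (p : CD n) :
  exists eg, 0 < eg /\ forall mu, Z mu -> cd_nsq n (cd_sub n mu p) < (1 + eg) * (1 + eg) ->
     cd_nsq n (cd_sub n mu p) <= 1.
Proof.
  destruct (classic (exists eg, 0 < eg /\ forall mu, Z mu -> cd_nsq n (cd_sub n mu p) < (1 + eg) * (1 + eg) ->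
     cd_nsq n (cd_sub n mu p) <= 1)) as [h|Hneg]; auto. exfalso.
  assert (H : forall k : nat, exists mu, Z mu /\ cd_nsq n (cd_sub n mu p) < (1 + / (INR k + 1)) * (1 + / (INR k + 1))
             /\ 1 < cd_nsq n (cd_sub n mu p)).
  { intro k. apply NNPP; intro Hn; apply Hneg. exists (/ (INR k + 1)). split.
    apply Rinv_0_lt_compat; pose proof (pos_INR k); lra.
    intros mu Zmu Hlt. apply Rnot_lt_le; intro Hgt; apply Hn; exists mu; auto. }
  set (g := fun k => proj1_sig (constructive_indefinite_description _ (H k))).
  assert (Hg : forall k, Z (g k) /\ cd_nsq n (cd_sub n (g k) p) < (1 + / (INR k + 1)) * (1 + / (INR k + 1))
             /\ 1 < cd_nsq n (cd_sub n (g k) p)).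
  { intro k; unfold g; destruct (constructive_indefinite_description _ (H k)); simpl; auto. }
  assert (Hinv : forall k, 0 < / (INR k + 1) <= 1).
  { intro k. pose proof (pos_INR k). split. apply Rinv_0_lt_compat; lra.
    rewrite <- Rinv_1. apply Rinv_le_contravar; lra. }
  assert (Hb : forall k, cd_nsq n (g k) <= 8 + 2 * cd_nsq n p).
  { intro k. rewrite <- (I_subK n (g k) p). pose proof (nsq_add_le n (cd_sub n (g k) p) p).
    destruct (Hg k) as [_ [h1 _]]. destruct (Hinv k). nra. }
  destruct (cluster_cd n g _ Hb) as [c Hc].
  assert (He2 : 0 < (e0/2) * (e0/2)) by nra.
  destruct (Hc _ He2 O) as [k1 [_ Hk1]].
  destruct (Hg k1) as [Z1 [_ G1]].
  set (gv := cd_nsq n (cd_sub n (g k1) p) - 1).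
  assert (Hgv : 0 < gv / 3) by (unfold gv; lra).
  destruct (INR_archimed (gv/3) 1 Hgv) as [N HN].
  destruct (Hc _ He2 N) as [k [Hk HkN]].
  destruct (Hg k) as [Zk [Gk _]].
  assert (E : g k = g k1).
  { apply Hud; auto. eapply Rle_lt_trans. apply (norm_tri n (g k) c (g k1)).
    rewrite (norm_sym n c (g k1)).
    pose proof (norm_lt_of n _ (e0/2) ltac:(lra) HkN). pose proof (norm_lt_of n _ (e0/2) ltac:(lra) Hk1). lra. }
  rewrite E in Gk.
  apply le_INR in Hk. pose proof (pos_INR N).
  set (a := / (INR k + 1)) in *. destruct (Hinv k) as [Ha0 Ha1].
  assert (a * (INR k + 1) = 1) by (unfold a; field; lra).
  assert (a < gv / 3) by nra.
  unfold gv in *. nra.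
Qed.

Theorem lemma1p6 (d : nat) (Hd : (d <= 3)%nat) (Z : CD d -> Prop)
  (HZ : is_subring d Z) (HZc : conj_closed d Z) (HZd : discrete d Z)
  (a : nat -> CD d) (Ha : forall n, Z (a (S n)))
  (x : nat -> CD d)
  (Hdef : forall n, x n <> cd_zero d)
  (Hrec : forall n, x (S n) = T d (a (S n)) (x n))
  (Hlt : forall n, cd_norm d (x n) < 1) :
  ~ Un_cv (fun n => cd_norm d (x n)) 1.
Proof.
  intro Hcv.
  destruct HZ as [Z1 [Zsub _]].
  set (r := fun t => cd_nsq d (x t)).
  assert (Hr : forall t, 0 < r t < 1).
  { intro t. unfold r. split.
    - pose proof (nsq_nonneg d (x t)). destruct (Rle_lt_or_eq_dec _ _ H); auto.
      exfalso. apply (Hdef t). apply nsq_eq0; auto.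
    - pose proof (nsq_lt_of d (x t) 1 (Hlt t)). lra. }
  set (y := fun t => conjn d t (x t)).
  set (b := fun t => conjn d t (a t)).
  set (beta := betaseq d b).
  set (zeta := fun t => cd_add d (y t) (beta t)).
  assert (Hy : forall t, cd_nsq d (y t) = r t) by (intro t; unfold y, r; apply nsq_conjn).
  assert (HyS : forall t, y (S t) = cd_sub d (cd_scale d (/ r t) (y t)) (b (S t))).
  { intro t. unfold y, b. rewrite Hrec. unfold T, cd_inv. rewrite conjn_sub, conjn_scale.
    unfold conjn at 1. simpl. fold (conjn d t (cd_conj d (x t))). rewrite conjn_conj, conj_conj. auto. }
  assert (HzS : forall t, zeta (S t) = cd_add d (beta t) (cd_scale d (/ r t) (y t))).
  { intro t. unfold zeta. rewrite HyS. unfold beta at 1. simpl. fold beta. apply I_z3. }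
  assert (F4 : forall t q, r t * cd_nsq d (cd_sub d (zeta (S t)) q) =
             cd_nsq d (cd_sub d (zeta t) q) + (1 - cd_nsq d (cd_sub d (beta t) q)) * (1 - r t)).
  { intros t q. rewrite HzS, I_shift. unfold zeta. rewrite I_shift2.
    rewrite !nsq_add, dot_scale_r, nsq_scale, Hy. specialize (Hr t). field. lra. }
  assert (Hstep : forall t, r t * cd_nsq d (cd_sub d (zeta (S t)) (zeta t)) = (1 - r t) * (1 - r t)).
  { intro t. rewrite F4, I_sub_diag, nsq_zero. unfold zeta. rewrite I_subadd_opp, nsq_opp, Hy. ring. }
  assert (Z0 : Z (cd_zero d)) by (rewrite <- (I_sub_diag d (cd_one d)); auto).
  assert (Zadd : forall u v, Z u -> Z v -> Z (cd_add d u v)).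
  { intros u v Hu Hv. rewrite I_add_sub_zero. auto. }
  assert (Zconjn : forall k u, Z u -> Z (conjn d k u)).
  { intros k; induction k; intros u Hu; [exact Hu| unfold conjn in *; simpl; apply HZc; auto]. }
  assert (Zbeta : forall t, Z (beta t)).
  { intro t; induction t; simpl; auto. apply Zadd; auto. unfold b. apply Zconjn, Ha. }
  destruct (HZd _ Z0) as [e0 [He0 Hd0]].
  assert (Hud : forall l m, Z l -> Z m -> cd_norm d (cd_sub d l m) < e0 -> l = m).
  { intros l m Hl Hm Hn. assert (E : cd_sub d l m = cd_zero d).
    { apply Hd0; auto. rewrite I_sub_zero; auto. }
    rewrite <- (I_subK d l m), E, I_zero_add; auto. }
  destruct (cluster_cd d y 1) as [p Hp].
  { intro k; rewrite Hy; specialize (Hr k); lra. }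
  destruct (gap_lemma d Z e0 He0 Hud p) as [eg [Heg Hgap]].
  assert (Hsmall : forall rho, 0 < rho -> exists T0, forall t, (T0 <= t)%nat ->
            cd_norm d (cd_sub d (zeta (S t)) (zeta t)) < rho).
  { intros rho Hrho. set (th := Rmin (1/2) (rho/4)).
    assert (Hth : 0 < th) by (unfold th; apply Rmin_glb_lt; lra).
    assert (Hth1 : th <= 1/2) by apply Rmin_l. assert (Hth2 : th <= rho/4) by apply Rmin_r.
    destruct (Hcv th Hth) as [T0 HT0]. exists T0. intros t Ht.
    specialize (HT0 t Ht). unfold R_dist in HT0. simpl in HT0.
    pose proof (norm_sq d (x t)) as Ns. pose proof (Hlt t). pose proof (norm_nonneg d (x t)).
    apply Rabs_def2 in HT0. fold (r t) in Ns.
    apply norm_lt_of; [lra|].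
    specialize (Hstep t). pose proof (nsq_nonneg d (cd_sub d (zeta (S t)) (zeta t))).
    set (nn := cd_norm d (x t)) in *.
    assert (h1 : 1 - r t < 2 * th) by nra.
    assert (h2 : 1/4 <= r t) by nra.
    set (S0 := cd_nsq d (cd_sub d (zeta (S t)) (zeta t))) in *.
    assert (h3 : (1 - r t) * (1 - r t) < 4 * th * th) by (specialize (Hr t); nra).
    nra. }

  set (e1 := Rmin e0 eg / 2).
  assert (He1 : 0 < e1) by (unfold e1; assert (0 < Rmin e0 eg) by (apply Rmin_glb_lt; lra); lra).
  assert (He1a : e1 <= e0 / 2) by (unfold e1; pose proof (Rmin_l e0 eg); lra).
  assert (He1b : e1 <= eg / 2) by (unfold e1; pose proof (Rmin_r e0 eg); lra).
  destruct (Hsmall (e1/4)) as [T0 HT0]; [lra|].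
  destruct (Hp ((e1/4)*(e1/4)) ltac:(nra) T0) as [s [Hs Hys]].
  set (H := fun t l => cd_norm d (cd_sub d (zeta t) (cd_add d p l))).
  assert (Hzq : forall t, cd_sub d (zeta t) (cd_add d p (beta t)) = cd_sub d (y t) p).
  { intro t. unfold zeta. apply I_cancel_r. }
  assert (Hys' : cd_norm d (cd_sub d (y s) p) < e1/4) by (apply norm_lt_of; lra).
  assert (Ht0 : exists t0, (T0 <= t0)%nat /\ 0 < H t0 (beta s) /\ H t0 (beta s) < e1/2).
  { destruct (Req_dec (cd_nsq d (cd_sub d (y s) p)) 0) as [E|E].
    - exists (S s). split; [lia|]. unfold H.
      assert (E0 : cd_norm d (cd_sub d (zeta s) (cd_add d p (beta s))) = 0).
      { rewrite Hzq. unfold cd_norm. rewrite E. apply sqrt_0. }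
      pose proof (norm_tri d (zeta (S s)) (zeta s) (cd_add d p (beta s))).
      pose proof (norm_tri d (zeta (S s)) (cd_add d p (beta s)) (zeta s)).
      rewrite (norm_sym d (cd_add d p (beta s)) (zeta s)) in H1.
      pose proof (HT0 s Hs).
      assert (0 < cd_norm d (cd_sub d (zeta (S s)) (zeta s))).
      { specialize (Hstep s). specialize (Hr s). pose proof (norm_sq d (cd_sub d (zeta (S s)) (zeta s))).
        pose proof (norm_nonneg d (cd_sub d (zeta (S s)) (zeta s))).
        destruct (Rle_lt_or_eq_dec _ _ H4); auto. exfalso. rewrite <- e in H3. nra. }
      lra.
    - exists s. split; auto. unfold H. rewrite Hzq. split; [|lra].
      unfold cd_norm. apply sqrt_lt_R0. pose proof (nsq_nonneg d (cd_sub d (y s) p)). lra. }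
  destruct Ht0 as [t0 [Ht0T [Ht0p Ht0s]]].
  assert (Hfar : forall l, Z l -> l <> beta s -> e1 <= H t0 l).
  { intros l Zl Hne.
    assert (e0 <= cd_norm d (cd_sub d l (beta s))).
    { apply Rnot_lt_le; intro Hc. apply Hne. apply Hud; auto. }
    rewrite <- (I_cancel_l d p l (beta s)) in H0.
    pose proof (norm_tri d (cd_add d p l) (zeta t0) (cd_add d p (beta s))).
    rewrite (norm_sym d (cd_add d p l) (zeta t0)) in H1. unfold H in *. lra. }
  set (c := Rmin (H t0 (beta s)) (e1/2)).
  assert (Hc0 : 0 < c) by (unfold c; apply Rmin_glb_lt; lra).
  assert (Hc1 : c <= H t0 (beta s)) by apply Rmin_l.
  assert (Hc2 : c <= e1/2) by apply Rmin_r.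
  assert (Claim : forall k l, Z l -> c <= H (k + t0)%nat l).
  { intro k; induction k as [|k IHk]; intros l Zl.
    - simpl. destruct (classic (l = beta s)) as [E|E].
      + subst l. auto.
      + pose proof (Hfar l Zl E). lra.
    - specialize (IHk l Zl). simpl plus. set (t := (k + t0)%nat) in *.
      assert (Tt : (T0 <= t)%nat) by (unfold t; lia).
      destruct (Rlt_dec (H t l) e1) as [Hn|Hn].
      + assert (HD : cd_nsq d (cd_sub d (beta t) (cd_add d p l)) <= 1).
        { rewrite <- I_subsub. apply Hgap. apply Zsub; auto.
          rewrite I_subsub. apply nsq_lt_of.
          pose proof (norm_tri d (beta t) (zeta t) (cd_add d p l)).
          assert (cd_norm d (cd_sub d (beta t) (zeta t)) < 1).
          { apply norm_lt_of; [lra|]. unfold zeta. rewrite I_subadd_opp, nsq_opp, Hy.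
            specialize (Hr t); lra. }
          unfold H in Hn. lra. }
        specialize (F4 t (cd_add d p l)).
        pose proof (nsq_nonneg d (cd_sub d (zeta (S t)) (cd_add d p l))).
        pose proof (nsq_nonneg d (cd_sub d (zeta t) (cd_add d p l))).
        specialize (Hr t).
        assert (cd_nsq d (cd_sub d (zeta t) (cd_add d p l)) <= cd_nsq d (cd_sub d (zeta (S t)) (cd_add d p l))) by nra.
        apply norm_le_of in H2. unfold H in *. lra.
      + pose proof (norm_tri d (zeta t) (zeta (S t)) (cd_add d p l)).
        rewrite (norm_sym d (zeta t) (zeta (S t))) in H0.
        pose proof (HT0 t Tt). unfold H in *. lra. }
  destruct (Hp (c*c) ltac:(nra) t0) as [t [Ht Hyt]].
  specialize (Claim (t - t0)%nat (beta t) (Zbeta t)).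
  replace (t - t0 + t0)%nat with t in Claim by lia.
  unfold H in Claim. rewrite Hzq in Claim.
  pose proof (norm_lt_of d _ c ltac:(lra) Hyt). lra.
Qed.
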